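(* Let $\pi_0\neq\pi_1$ be two primes. Then there exist uncountably many irrational real numbers $x$ with the following property: if $(q_s)_{s\ge0}$ denotes the sequence of denominators of the convergents of $x$, then for every $s\ge0$, $q_{2s}$ is a power of $\pi_0$ and $q_{2s+1}$ is a power of $\pi_1$ (with exponent $\ge1$ for $s\ge1$ resp. $s\ge0$). In particular, each $q_s$ with $s\ge1$ is divisible only by primes in $\{\pi_0,\pi_1\}$.
   Context: For an irrational $x$ with continued fraction expansion $[a_0;a_1,a_2,\dots]$, the convergents are $p_s/q_s$. They are defined by $p_{-1}=1$, $p_0=a_0$, $q_{-1}=0$, $q_0=1$, and for $s\ge1$, $p_s=a_sp_{s-1}+p_{s-2}$ and $q_s=a_sq_{s-1}+q_{s-2}$. *)

(* Defs.v *)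
From Stdlib Require Import Reals ZArith Znumtheory.
Open Scope R_scope.

Definition irrational (x : R) : Prop :=
  forall (p q : Z), q <> 0%Z -> x <> IZR p / IZR q.

(* Complete quotients: x_0 = x, x_{n+1} = 1 / (x_n - floor x_n).
   Int_part is the floor function (Int_part x = up x - 1). *)
Fixpoint cf_rem (x : R) (n : nat) : R :=
  match n with
  | O => x
  | S m => / frac_part (cf_rem x m)
  end.

Definition cf_a (x : R) (n : nat) : Z := Int_part (cf_rem x n).

(* Pairs (q_{n-1}, q_n) with q_{-1} = 0, q_0 = 1,
   q_n = a_n q_{n-1} + q_{n-2}. *)
Fixpoint cf_qpair (x : R) (n : nat) : Z * Z :=
  match n with
  | O => (0%Z, 1%Z)
  | S m => let (qa, qb) := cf_qpair x m in
           (qb, (cf_a x (S m) * qb + qa)%Z)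
  end.

Definition cf_q (x : R) (n : nat) : Z := snd (cf_qpair x n).

Definition alt_prime_power_denoms (p0 p1 : Z) (x : R) : Prop :=
  (forall s : nat, exists k : nat,
      ((s >= 1)%nat -> (k >= 1)%nat) /\ cf_q x (2 * s) = (p0 ^ Z.of_nat k)%Z) /\
  (forall s : nat, exists k : nat,
      (k >= 1)%nat /\ cf_q x (2 * s + 1) = (p1 ^ Z.of_nat k)%Z).

(* Main.v *)
Require Import Defs.
From Stdlib Require Import Reals ZArith Znumtheory Zpow_facts Lia Lra.
From mathcomp Require ssreflect ssrbool eqtype ssrnat div prime cyclic zify.
Open Scope R_scope.

Module EulerM.
Import ssreflect ssrbool eqtype ssrnat div prime cyclic zify.
Local Open Scope nat_scope.
Lemma euler_nat (a n : nat) : (0 < n)%N -> coprime a n -> (0 < a)%N ->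
  (0 < totient n)%N /\ exists k, a ^ totient n - 1 = k * n.
Proof.
move=> n0 co a0; split; first by rewrite totient_gt0.
have := Euler_exp_totient co.
move/eqP; rewrite eqn_mod_dvd ?expn_gt0 ?a0 // => /dvdnP [k hk]; by exists k.
Qed.
Lemma divZ (d m : nat) : d %| m -> (Z.of_nat d | Z.of_nat m)%Z.
Proof. move=> /dvdnP [k ->]. exists (Z.of_nat k). lia. Qed.
Lemma expn_pow a b : expn a b = Nat.pow a b.
Proof. elim: b => [|b IH]; first by rewrite expn0. by rewrite expnS IH. Qed.
Lemma euler_Z (r q : Z) : (0 < r)%Z -> (0 < q)%Z -> rel_prime r q ->
  (0 < Z.of_nat (totient (Z.to_nat q)))%Z /\
  (q | r ^ (Z.of_nat (totient (Z.to_nat q))) - 1)%Z.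
Proof.
move=> r0 q0 rp.
have co : coprime (Z.to_nat r) (Z.to_nat q).
  apply/eqP. set g := gcdn _ _.
  have h1 := divZ _ _ (dvdn_gcdl (Z.to_nat r) (Z.to_nat q)).
  have h2 := divZ _ _ (dvdn_gcdr (Z.to_nat r) (Z.to_nat q)).
  rewrite Z2Nat.id in h1; last lia. rewrite Z2Nat.id in h2; last lia.
  case: rp => _ _ H. have := H _ h1 h2. move/Z.divide_1_r. rewrite /g. lia.
have [t0 [k hk]] := euler_nat _ _ (ltac:(lia) : (0 < Z.to_nat q)%N) co (ltac:(lia)).
split; first lia.
exists (Z.of_nat k).
set t := totient (Z.to_nat q).
have e : Z.of_nat (Z.to_nat r ^ t) = (r ^ Z.of_nat t)%Z.
  rewrite expn_pow Nat2Z.inj_pow Z2Nat.id //; lia.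
have pos : (0 < Z.to_nat r ^ t)%N by rewrite expn_gt0; apply/orP; left; lia.
have : Z.of_nat (Z.to_nat r ^ t - 1) = Z.of_nat (k * Z.to_nat q) by rewrite hk.
rewrite -e. lia.
Qed.
End EulerM.

Section Constr.
Local Open Scope Z_scope.
Variables (p0 p1 : Z) (f : nat -> R).
Hypotheses (hp0 : prime p0) (hp1 : prime p1) (hne : p0 <> p1).

Definition rr (k : nat) : Z := if Nat.even k then p0 else p1.
Definition Ex (q : Z) : Z := Z.of_nat (prime.totient (Z.to_nat q)).
Definition cand qa qb r t := qa * r ^ (t * Ex qb).
Definition aof qa qb c := (c - qa) / qb.
Definition pick qa qb r T :=
  let c1 := cand qa qb r 1 in
  if Z.eq_dec (aof qa qb c1) T then cand qa qb r 2 else c1.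

Fixpoint st (n : nat) : Z * Z :=
  match n with
  | O => (0, 1)
  | S m => (snd (st m), if Nat.eqb m 0 then p1
            else pick (fst (st m)) (snd (st m)) (rr (S m)) (cf_a (f (m - 1)) (S m)))
  end.

Definition aa (n : nat) : Z :=
  match n with
  | O => 0
  | S m => (snd (st (S m)) - fst (st m)) / snd (st m)
  end.

Lemma choice_spec qa qb r i T : 0 <= i -> qa = r ^ i -> 0 < qb -> 2 <= r ->
  1 <= Ex qb -> (qb | r ^ (Ex qb) - 1) ->
  let c := pick qa qb r T in
  (exists s, 1 <= s /\ c = r ^ (i + s)) /\ c = aof qa qb c * qb + qa /\
  1 <= aof qa qb c /\ aof qa qb c <> T.
Proof.
  intros hi hqa hqb hr hE hdiv c.
  set (E := Ex qb) in *.
  assert (hqa1 : 1 <= qa) by (subst qa; pose proof (Z.pow_pos_nonneg r i); lia).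
  assert (hrE : 1 < r ^ E) by (apply Z.pow_gt_1; lia).
  assert (c1e : cand qa qb r 1 = r ^ (i + E)).
  { unfold cand. fold E. rewrite Z.pow_add_r by lia. rewrite hqa. f_equal. f_equal. lia. }
  assert (c2e : cand qa qb r 2 = cand qa qb r 1 * r ^ E).
  { unfold cand. fold E. replace (2 * E) with (E + E) by lia. rewrite Z.pow_add_r by lia.
    replace (1 * E) with E by lia. ring. }
  assert (c2e' : cand qa qb r 2 = r ^ (i + 2 * E)).
  { rewrite c2e, c1e, <- Z.pow_add_r by lia. f_equal; lia. }
  assert (d1 : (qb | cand qa qb r 1 - qa)).
  { unfold cand. fold E. replace (1 * E) with E by lia.
    replace (qa * r ^ E - qa) with (qa * (r ^ E - 1)) by ring.
    apply Z.divide_mul_r. exact hdiv. }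
  assert (d2 : (qb | cand qa qb r 2 - qa)).
  { rewrite c2e. replace (cand qa qb r 1 * r ^ E - qa) with
      ((cand qa qb r 1 - qa) * r ^ E + qa * (r ^ E - 1)) by ring.
    apply Z.divide_add_r; [apply Z.divide_mul_l; exact d1|apply Z.divide_mul_r; exact hdiv]. }
  assert (exact : forall c', (qb | c' - qa) -> c' = aof qa qb c' * qb + qa).
  { intros c' [k hk]. unfold aof. rewrite hk, Z.div_mul by lia. lia. }
  assert (pos : forall c', (qb | c' - qa) -> qa < c' -> 1 <= aof qa qb c').
  { intros c' [k hk] hlt. unfold aof. rewrite hk, Z.div_mul by lia. nia. }
  assert (g1 : qa < cand qa qb r 1).
  { unfold cand. fold E. replace (1 * E) with E by lia. nia. }
  assert (g2 : cand qa qb r 1 < cand qa qb r 2) by (rewrite c2e; nia).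
  unfold c, pick. destruct (Z.eq_dec (aof qa qb (cand qa qb r 1)) T) as [e|e].
  - split; [exists (2 * E); split; [lia|exact c2e']|].
    split; [apply exact; exact d2|]. split; [apply pos; [exact d2|lia]|].
    intros e2. rewrite <- e in e2.
    pose proof (exact _ d1). pose proof (exact _ d2). rewrite e2 in *. lia.
  - split; [exists E; split; [lia|exact c1e]|].
    split; [apply exact; exact d1|]. split; [apply pos; [exact d1|lia]|exact e].
Qed.

Lemma rr_SS n : rr (S (S n)) = rr n.
Proof. reflexivity. Qed.

Lemma rr_prime n : prime (rr n).
Proof. unfold rr; destruct (Nat.even n); assumption. Qed.

Lemma rr_ne n : rr (S n) <> rr n.
Proof.
  unfold rr. rewrite Nat.even_succ, <- Nat.negb_even.
  destruct (Nat.even n); simpl; auto.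
Qed.

Lemma rel_prime_rr n j : 0 <= j -> rel_prime (rr (S n)) (rr n ^ j).
Proof.
  intros hj. apply rel_prime_Zpower_r; [exact hj|].
  apply prime_rel_prime; [apply rr_prime|].
  intros hd. apply (rr_ne n). apply prime_div_prime; auto using rr_prime.
Qed.

Definition Inv n := exists i j, 0 <= i /\ 1 <= j /\ st n = (rr (S n) ^ i, rr n ^ j).

Lemma step_facts n : (1 <= n)%nat -> Inv n ->
  Inv (S n) /\ snd (st (S n)) = aa (S n) * snd (st n) + fst (st n) /\
  1 <= aa (S n) /\ aa (S n) <> cf_a (f (n - 1)) (S n).
Proof.
  intros hn [i [j [hi [hj hst]]]].
  assert (hr : 2 <= rr (S n)) by (apply prime_ge_2, rr_prime).
  assert (hr0 : 2 <= rr n) by (apply prime_ge_2, rr_prime).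
  assert (hqb : 0 < rr n ^ j) by (apply Z.pow_pos_nonneg; lia).
  destruct (EulerM.euler_Z (rr (S n)) (rr n ^ j) ltac:(lia) hqb (rel_prime_rr n j ltac:(lia)))
    as [hE hdiv].
  destruct (choice_spec (rr (S n) ^ i) (rr n ^ j) (rr (S n)) i (cf_a (f (n - 1)) (S n))
              hi eq_refl hqb hr ltac:(unfold Ex; lia) hdiv) as [[s [hs cs]] [ce [c1 c2]]].
  assert (est : st (S n) = (rr n ^ j, pick (rr (S n) ^ i) (rr n ^ j) (rr (S n)) (cf_a (f (n - 1)) (S n)))).
  { simpl st. rewrite hst. simpl. destruct n; [lia|reflexivity]. }
  assert (eaa : aa (S n) = aof (rr (S n) ^ i) (rr n ^ j)
                 (pick (rr (S n) ^ i) (rr n ^ j) (rr (S n)) (cf_a (f (n - 1)) (S n)))).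
  { unfold aa. rewrite est, hst. reflexivity. }
  rewrite eaa. split; [|split; [|split]].
  - exists j, (i + s). split; [lia|]. split; [lia|]. rewrite est, cs. reflexivity.
  - rewrite est, hst. exact ce.
  - exact c1.
  - exact c2.
Qed.

Lemma Inv_all n : (1 <= n)%nat -> Inv n.
Proof.
  induction n as [|n IH]; intros hn; [lia|].
  destruct n as [|n].
  - exists 0, 1. split; [lia|]. split; [lia|]. unfold rr; simpl; f_equal; unfold Z.pow_pos; simpl; ring.
  - exact (proj1 (step_facts (S n) ltac:(lia) (IH ltac:(lia)))).
Qed.

Lemma aa_pos n : (1 <= n)%nat -> 1 <= aa n.
Proof.
  intros hn. destruct n as [|n]; [lia|]. destruct n as [|n].
  - unfold aa. simpl. rewrite Z.div_1_r. pose proof (prime_ge_2 _ hp1). lia.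
  - exact (proj1 (proj2 (proj2 (step_facts (S n) ltac:(lia) (Inv_all (S n) ltac:(lia)))))).
Qed.

Lemma qpair_st x : (forall n, cf_a x n = aa n) -> forall n, cf_qpair x n = st n.
Proof.
  intros hx n. induction n as [|n IH]; [reflexivity|].
  simpl cf_qpair. rewrite IH, (surjective_pairing (st n)), hx.
  destruct n as [|n].
  - simpl. unfold aa. simpl. rewrite Z.div_1_r. f_equal. ring.
  - destruct (step_facts (S n) ltac:(lia) (Inv_all (S n) ltac:(lia))) as [_ [e _]].
    rewrite (surjective_pairing (st (S (S n)))), e. reflexivity.
Qed.

End Constr.
Lemma Int_part_eq (y : R) (k : Z) : IZR k < y < IZR k + 1 -> Int_part y = k.
Proof.
  intros [h1 h2]. unfold Int_part.
  assert (up y = (k + 1)%Z). { symmetry. apply tech_up; rewrite plus_IZR; lra. }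
  lia.
Qed.

Section Real.
Variable a : nat -> Z.
Hypothesis Ha : forall n, (1 <= n)%nat -> (1 <= a n)%Z.

Fixpoint lu (n m : nat) : R * R :=
  match m with
  | O => (IZR (a n), IZR (a n) + 1)
  | S m' => let (l', u') := lu (S n) m' in (IZR (a n) + / u', IZR (a n) + / l')
  end.
Definition lo n m := fst (lu n m).
Definition up' n m := snd (lu n m).

Lemma lo_S n m : lo n (S m) = IZR (a n) + / up' (S n) m.
Proof. unfold lo, up'; simpl; destruct (lu (S n) m); reflexivity. Qed.
Lemma up_S n m : up' n (S m) = IZR (a n) + / lo (S n) m.
Proof. unfold lo, up'; simpl; destruct (lu (S n) m); reflexivity. Qed.
Lemma lo_0 n : lo n 0 = IZR (a n). Proof. reflexivity. Qed.
Lemma up_0 n : up' n 0 = IZR (a n) + 1. Proof. reflexivity. Qed.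

Lemma aS n : 1 <= IZR (a (S n)).
Proof. apply IZR_le. apply Ha. lia. Qed.

Lemma L1 m : forall n, IZR (a n) <= lo n m /\ IZR (a n) <= up' n m.
Proof.
  induction m as [|m IH]; intros n.
  - rewrite lo_0, up_0; lra.
  - rewrite lo_S, up_S. destruct (IH (S n)) as [h1 h2]. pose proof (aS n).
    split.
    + assert (0 < / up' (S n) m) by (apply Rinv_0_lt_compat; lra). lra.
    + assert (0 < / lo (S n) m) by (apply Rinv_0_lt_compat; lra). lra.
Qed.

Lemma pos_lo n m : 1 <= lo (S n) m.
Proof. destruct (L1 m (S n)); pose proof (aS n); lra. Qed.
Lemma pos_up n m : 1 <= up' (S n) m.
Proof. destruct (L1 m (S n)); pose proof (aS n); lra. Qed.

Lemma inv_le1 x : 1 <= x -> 0 < / x <= 1.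
Proof.
  intros h. split. apply Rinv_0_lt_compat; lra.
  assert (hw : / x <= / 1) by (apply Rinv_le_contravar; lra).
  rewrite Rinv_1 in hw. exact hw.
Qed.

Lemma L3 n k : lo n k <= IZR (a n) + 1 /\ up' n k <= IZR (a n) + 1.
Proof.
  destruct k as [|k].
  - rewrite lo_0, up_0; lra.
  - rewrite lo_S, up_S. pose proof (inv_le1 _ (pos_lo n k)).
    pose proof (inv_le1 _ (pos_up n k)). lra.
Qed.

Lemma L2 k : forall n m, lo n k <= up' n m /\ lo n m <= up' n k.
Proof.
  induction k as [|k IH]; intros n m.
  - rewrite lo_0, up_0. destruct (L1 m n). destruct (L3 n m). lra.
  - destruct m as [|m].
    + rewrite lo_0, up_0. destruct (L3 n (S k)). destruct (L1 (S k) n). lra.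
    + rewrite !lo_S, !up_S. destruct (IH (S n) m) as [h1 h2].
      pose proof (pos_lo n k). pose proof (pos_lo n m).
      split; apply Rplus_le_compat_l; apply Rinv_le_contravar; lra.
Qed.

Definition P n y := forall m, lo n m <= y <= up' n m.

Lemma key n y : P n y ->
  IZR (a n) < y < IZR (a n) + 1 /\ P (S n) (/ (y - IZR (a n))).
Proof.
  intros HP.
  assert (h1 : IZR (a n) < y).
  { destruct (HP 1%nat) as [h _]. rewrite lo_S, up_0 in h.
    pose proof (aS n). assert (0 < / (IZR (a (S n)) + 1)) by (apply Rinv_0_lt_compat; lra).
    lra. }
  split; [split|].
  - exact h1.
  - destruct (HP 2%nat) as [_ h]. rewrite up_S, lo_S, up_0 in h.
    pose proof (aS n). pose proof (aS (S n)).
    assert (0 < / (IZR (a (S (S n))) + 1)) by (apply Rinv_0_lt_compat; lra).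
    assert (/ (IZR (a (S n)) + / (IZR (a (S (S n))) + 1)) < 1).
    { assert (hw : /(IZR (a (S n)) + / (IZR (a (S (S n))) + 1)) < / 1)
        by (apply Rinv_1_lt_contravar; lra).
      rewrite Rinv_1 in hw. exact hw. }
    lra.
  - intros m. destruct (HP (S m)) as [h2 h3]. rewrite lo_S in h2. rewrite up_S in h3.
    pose proof (pos_lo n m). pose proof (pos_up n m).
    assert (hp : 0 < y - IZR (a n)) by lra.
    split.
    + rewrite <- (Rinv_inv (lo (S n) m)). apply Rinv_le_contravar; [lra|].
      lra.
    + rewrite <- (Rinv_inv (up' (S n) m)). apply Rinv_le_contravar.
      * apply Rinv_0_lt_compat; lra.
      * lra.
Qed.

Lemma exists_P0 : exists x, P 0 x.
Proof.
  set (E := fun y => exists m, y = lo 0 m).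
  assert (hb : bound E).
  { exists (up' 0 0). intros y [m ->]. apply (L2 m 0 0). }
  assert (he : exists y, E y) by (exists (lo 0 0); exists 0%nat; reflexivity).
  destruct (completeness E hb he) as [x [hub hlub]].
  exists x. intros m. split.
  - apply hub. exists m; reflexivity.
  - apply hlub. intros y [k ->]. apply (L2 k 0 m).
Qed.

Fixpoint ys (x : R) (n : nat) : R :=
  match n with O => x | S n' => / (ys x n' - IZR (a n')) end.

Lemma ys_P x : P 0 x -> forall n, P n (ys x n).
Proof.
  intros h n; induction n as [|n IH]; [exact h|].
  simpl. exact (proj2 (key n _ IH)).
Qed.

Lemma cf_rem_ys x : P 0 x -> forall n, cf_rem x n = ys x n /\ cf_a x n = a n.
Proof.
  intros h n. induction n as [|n IH].
  - simpl. split; [reflexivity|]. unfold cf_a; simpl.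
    apply Int_part_eq. exact (proj1 (key 0 x h)).
  - destruct IH as [e1 e2].
    assert (e3 : cf_rem x (S n) = ys x (S n)).
    { simpl. unfold frac_part. fold (cf_a x n). rewrite e1 in *. rewrite e2. reflexivity. }
    split; [exact e3|]. unfold cf_a. rewrite e3.
    apply Int_part_eq. exact (proj1 (key _ _ (ys_P x h (S n)))).
Qed.

Lemma ys_irr x : P 0 x -> forall N n p q, (0 < q)%Z -> (Z.to_nat q <= N)%nat ->
  ys x n <> IZR p / IZR q.
Proof.
  intros h N. induction N as [|N IH]; intros n p q hq hN; [lia|].
  intros E.
  destruct (key _ _ (ys_P x h n)) as [[b1 b2] _].
  rewrite E in b1, b2.
  assert (hQ : 0 < IZR q) by (apply IZR_lt; exact hq).
  assert (c1 : IZR (a n * q) < IZR p).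
  { rewrite mult_IZR. apply (Rmult_lt_compat_r (IZR q)) in b1; [|exact hQ].
    field_simplify in b1; lra. }
  assert (c2 : IZR p < IZR ((a n + 1) * q)).
  { rewrite mult_IZR, plus_IZR. apply (Rmult_lt_compat_r (IZR q)) in b2; [|exact hQ].
    field_simplify in b2; lra. }
  apply lt_IZR in c1. apply lt_IZR in c2.
  apply (IH (S n) q (p - a n * q)%Z); [lia|lia|].
  simpl. rewrite E. rewrite minus_IZR, mult_IZR.
  assert (IZR p - IZR (a n) * IZR q <> 0).
  { rewrite <- mult_IZR, <- minus_IZR. apply not_0_IZR. lia. }
  field. split; lra.
Qed.

Lemma real_construct : exists x, irrational x /\ forall n, cf_a x n = a n.
Proof.
  destruct exists_P0 as [x hx]. exists x. split.
  - intros p q hq E.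
    destruct (Z_lt_le_dec 0 q) as [hpos|hneg].
    + apply (ys_irr x hx (Z.to_nat q) 0 p q hpos (le_n _)). exact E.
    + apply (ys_irr x hx (Z.to_nat (-q)) 0 (-p) (-q)); [lia|lia|].
      simpl. rewrite E, !opp_IZR. field. apply not_0_IZR; exact hq.
  - intros n. exact (proj2 (cf_rem_ys x hx n)).
Qed.
End Real.

Lemma rr_even p0 p1 s : rr p0 p1 (2 * s) = p0.
Proof. unfold rr. rewrite Nat.even_mul. reflexivity. Qed.
Lemma rr_odd p0 p1 s : rr p0 p1 (2 * s + 1) = p1.
Proof.
  unfold rr. replace (2 * s + 1)%nat with (S (2 * s)) by lia.
  rewrite Nat.even_succ, Nat.odd_mul. reflexivity.
Qed.

Theorem mainTheorem8 (p0 p1 : Z) (hp0 : prime p0) (hp1 : prime p1)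
    (hne : p0 <> p1) :
  forall f : nat -> R,
    exists x : R,
      irrational x /\ alt_prime_power_denoms p0 p1 x /\
      (forall s : nat, (s >= 1)%nat ->
         forall r : Z, prime r -> (r | cf_q x s)%Z -> r = p0 \/ r = p1) /\
      (forall n : nat, f n <> x).
Proof.
  intros f.
  destruct (real_construct (aa p0 p1 f)) as [x [hirr hx]].
  { intros n hn. eapply aa_pos; eauto. }
  assert (cq : forall n, cf_q x n = snd (st p0 p1 f n)).
  { intros n. unfold cf_q. rewrite (qpair_st p0 p1 f hp0 hp1 hne x hx). reflexivity. }
  assert (hpow : forall n, (1 <= n)%nat -> exists j, (1 <= j)%Z /\ cf_q x n = (rr p0 p1 n ^ j)%Z).
  { intros n hn. destruct (Inv_all p0 p1 f hp0 hp1 hne n hn) as [i [j [hi [hj e]]]].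
    exists j. split; [exact hj|]. rewrite cq, e. reflexivity. }
  exists x. split; [exact hirr|]. split; [split|split].
  - intros s. destruct s as [|s].
    + exists 0%nat. split; [lia|]. rewrite cq. reflexivity.
    + destruct (hpow (2 * S s)%nat ltac:(lia)) as [j [hj e]].
      exists (Z.to_nat j). split; [lia|]. rewrite e, rr_even, Z2Nat.id by lia. reflexivity.
  - intros s. destruct (hpow (2 * s + 1)%nat ltac:(lia)) as [j [hj e]].
    exists (Z.to_nat j). split; [lia|]. rewrite e, rr_odd, Z2Nat.id by lia. reflexivity.
  - intros s hs r hr hd. destruct (hpow s hs) as [j [hj e]]. rewrite e in hd.
    assert (r = rr p0 p1 s).
    { apply (prime_power_prime r (rr p0 p1 s) j); [lia|exact hr| |exact hd].
      unfold rr; destruct (Nat.even s); assumption. }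
    unfold rr in H. destruct (Nat.even s); auto.
  - intros n E.
    destruct (step_facts p0 p1 f hp0 hp1 hne (S n) ltac:(lia) (Inv_all p0 p1 f hp0 hp1 hne (S n) ltac:(lia)))
      as [_ [_ [_ hne2]]].
    apply hne2. rewrite <- hx. replace (S n - 1)%nat with n by lia. rewrite E. reflexivity.
Qed.
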